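(* Let $K=\mathbb{Q}(\sqrt{d})$ with $d>1$ square-free, let $R_K$ be its regulator, and let $a=a_1+a_2\sqrt{d}$ ($a_1,a_2\in\mathbb{Q}$) be a totally positive element of $K$. Then $a\in\mathcal{F}_K$ if and only if $$\frac{|a_2|}{a_1}\le\frac{\tanh(R_K)}{\sqrt{d}}.$$
   Context: For a totally real number field $K$ with unit group $\mathcal{O}_K^\times$, a totally positive $a\in K$ is called reduced if $\mathrm{Tr}_{K/\mathbb{Q}}(a)\le \mathrm{Tr}_{K/\mathbb{Q}}(au^2)$ for all $u\in\mathcal{O}_K^\times$; $\mathcal{F}_K$ denotes the set of reduced totally positive elements. For a real quadratic field, $R_K=\log u$ where $u>1$ is the fundamental unit. *)

(* Defs.v *)
(* elements of K = Q(sqrt d) are pairs (a1,a2) of rationals,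
   representing a1 + a2 sqrt d. *)
From Stdlib Require Import Reals QArith ZArith Qreals.
Open Scope R_scope.

Definition squarefree (d : Z) : Prop :=
  forall n : Z, (n * n | d)%Z -> Z.abs n = 1%Z.

Definition qf_mul (d : Z) (x y : Q * Q) : Q * Q :=
  ((fst x * fst y + inject_Z d * snd x * snd y)%Q,
   (fst x * snd y + snd x * fst y)%Q).

Definition qf_tr (x : Q * Q) : Q := (2 * fst x)%Q.
Definition qf_norm (d : Z) (x : Q * Q) : Q :=
  (fst x * fst x - inject_Z d * snd x * snd x)%Q.

(* x is an algebraic integer: its characteristic polynomial
   X^2 - Tr(x) X + N(x) has integer coefficients *)
Definition qf_integral (d : Z) (x : Q * Q) : Prop :=
  (exists t : Z, qf_tr x == inject_Z t)%Q /\
  (exists n : Z, qf_norm d x == inject_Z n)%Q.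

Definition qf_unit (d : Z) (u : Q * Q) : Prop :=
  qf_integral d u /\ (qf_norm d u == 1 \/ qf_norm d u == -1)%Q.

Definition emb1 (d : Z) (x : Q * Q) : R := Q2R (fst x) + Q2R (snd x) * sqrt (IZR d).
Definition emb2 (d : Z) (x : Q * Q) : R := Q2R (fst x) - Q2R (snd x) * sqrt (IZR d).

Definition totally_positive (d : Z) (x : Q * Q) : Prop :=
  0 < emb1 d x /\ 0 < emb2 d x.

Definition reduced (d : Z) (a : Q * Q) : Prop :=
  forall u, qf_unit d u -> (qf_tr a <= qf_tr (qf_mul d a (qf_mul d u u)))%Q.

Definition fundamental_unit (d : Z) (eps : Q * Q) : Prop :=
  qf_unit d eps /\ 1 < emb1 d eps /\
  forall v, qf_unit d v -> 1 < emb1 d v -> emb1 d eps <= emb1 d v.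

(* Main.v *)
Require Import Defs.
From Stdlib Require Import Reals QArith ZArith Qreals Lra Psatz.
Open Scope R_scope.

Lemma Q2R_iZ z : Q2R (inject_Z z) = IZR z.
Proof. unfold Q2R, inject_Z; simpl. field. Qed.

Lemma Q2R_eqm (x y : Q) : (x == y)%Q -> Q2R x = Q2R y.
Proof. apply Qeq_eqR. Qed.

Lemma unit_neg d p q : qf_unit d (p, q) -> qf_unit d (-p, -q)%Q.
Proof.
  intros [[[t Ht] [n Hn]] Hu]. unfold qf_norm, qf_tr in *; simpl in *.
  split; [split|].
  - exists (- t)%Z. rewrite inject_Z_opp, <- Ht. unfold qf_tr; simpl; ring.
  - exists n. rewrite <- Hn. unfold qf_norm; simpl; ring.
  - unfold qf_norm; simpl. assert (E : (- p * - p - inject_Z d * - q * - q == p * p - inject_Z d * q * q)%Q) by ring.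
    rewrite E. exact Hu.
Qed.

Lemma unit_conj d p q : qf_unit d (p, q) -> qf_unit d (p, -q)%Q.
Proof.
  intros [[[t Ht] [n Hn]] Hu]. unfold qf_norm, qf_tr in *; simpl in *.
  split; [split|].
  - exists t. unfold qf_tr; simpl; exact Ht.
  - exists n. rewrite <- Hn. unfold qf_norm; simpl; ring.
  - unfold qf_norm; simpl. assert (E : (p * p - inject_Z d * - q * - q == p * p - inject_Z d * q * q)%Q) by ring.
    rewrite E. exact Hu.
Qed.

Lemma unit_norm_R d p q : (0 <= IZR d) -> qf_unit d (p, q) ->
  let s := sqrt (IZR d) in
  (Q2R p + Q2R q * s) * (Q2R p - Q2R q * s) = 1 \/
  (Q2R p + Q2R q * s) * (Q2R p - Q2R q * s) = -1.
Proof.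
  intros Hd [_ Hu] s. unfold qf_norm in Hu; simpl in Hu.
  assert (Hs : s * s = IZR d) by (apply sqrt_sqrt; exact Hd).
  assert (K : (Q2R p + Q2R q * s) * (Q2R p - Q2R q * s) =
     Q2R (p * p - inject_Z d * q * q)%Q).
  { rewrite Q2R_minus, !Q2R_mult, Q2R_iZ. rewrite <- Hs. ring. }
  rewrite K. destruct Hu as [H|H]; [left|right]; apply Q2R_eqm in H; rewrite H;
  unfold Q2R; simpl; field.
Qed.

Lemma trace_R d a1 a2 p q : (0 <= IZR d) ->
  let s := sqrt (IZR d) in
  Q2R (qf_tr (qf_mul d (a1, a2) (qf_mul d (p, q) (p, q)))) =
  (Q2R a1 + Q2R a2 * s) * (Q2R p + Q2R q * s) ^ 2 +
  (Q2R a1 - Q2R a2 * s) * (Q2R p - Q2R q * s) ^ 2.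
Proof.
  intros Hd s.
  assert (Hs : s * s = IZR d) by (apply sqrt_sqrt; exact Hd).
  unfold qf_tr, qf_mul; simpl.
  repeat rewrite ?Q2R_plus, ?Q2R_mult. rewrite Q2R_iZ.
  replace (Q2R 2) with 2 by (unfold Q2R; simpl; field).
  rewrite <- Hs. ring.
Qed.

Lemma key_ineq al be w : 0 < w ->
  (al + be <= al * w + be / w <-> 0 <= (w - 1) * (al * w - be)).
Proof.
  intros Hw.
  assert (E : al * w + be / w - (al + be) = (w - 1) * (al * w - be) / w)
    by (field; lra).
  split; intro H.
  - assert (0 <= (w - 1) * (al * w - be) / w) by lra.
    replace ((w - 1) * (al * w - be)) with (((w - 1) * (al * w - be) / w) * w)
      by (field; lra).
    apply Rmult_le_pos; lra.
  - assert (0 <= (w - 1) * (al * w - be) / w).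
    { unfold Rdiv. apply Rmult_le_pos; [lra|]. left; apply Rinv_0_lt_compat; lra. }
    lra.
Qed.

Lemma div_le_iff x a y c : 0 < a -> 0 < c -> (x / a <= y / c <-> x * c <= y * a).
Proof.
  intros Ha Hc. split; intro H.
  - assert (H1 := Rmult_le_compat_r (a * c) _ _ ltac:(nra) H).
    replace (x / a * (a * c)) with (x * c) in H1 by (field; lra).
    replace (y / c * (a * c)) with (y * a) in H1 by (field; lra).
    exact H1.
  - assert (H1 := Rmult_le_compat_r (/ (a * c)) _ _
       ltac:(left; apply Rinv_0_lt_compat; nra) H).
    replace (x * c * / (a * c)) with (x / a) in H1 by (field; lra).
    replace (y * a * / (a * c)) with (y / c) in H1 by (field; lra).
    exact H1.
Qed.

Lemma sq_inv e f : e * f = 1 \/ e * f = -1 -> f ^ 2 = / e ^ 2.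
Proof.
  intros HEE. assert (e <> 0) by (destruct HEE; intro; subst; lra).
  assert (H0 : e^2 <> 0) by (apply pow_nonzero; auto).
  apply (Rmult_eq_reg_l (e^2)); [|exact H0]. rewrite Rinv_r by exact H0.
  replace (e^2 * f^2) with ((e*f)^2) by ring. destruct HEE as [H1|H1]; rewrite H1; ring.
Qed.

Theorem lemma2 (d : Z) (hd : (1 < d)%Z) (hsf : squarefree d)
  (eps : Q * Q) (heps : fundamental_unit d eps)
  (a1 a2 : Q) (ha : totally_positive d (a1, a2)) :
  reduced d (a1, a2) <->
  Rabs (Q2R a2) / Q2R a1 <= tanh (ln (emb1 d eps)) / sqrt (IZR d).
Proof.
  assert (Hd : 1 < IZR d) by (apply IZR_lt; exact hd).
  assert (Hd0 : 0 <= IZR d) by lra.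
  set (s := sqrt (IZR d)).
  assert (Hs : s * s = IZR d) by (apply sqrt_sqrt; exact Hd0).
  assert (Hs0 : 0 < s) by (apply sqrt_lt_R0; lra).
  destruct ha as [Hal Hbe]. unfold emb1, emb2 in Hal, Hbe; simpl in Hal, Hbe.
  fold s in Hal, Hbe.
  set (A1 := Q2R a1) in *. set (A2 := Q2R a2) in *.
  set (al := A1 + A2 * s) in *. set (be := A1 - A2 * s) in *.
  destruct heps as [Heu [HE1 Hmin]].
  destruct eps as [p q].
  unfold emb1 in HE1, Hmin |- *; simpl in HE1, Hmin |- *. fold s in HE1, Hmin |- *.
  set (E := Q2R p + Q2R q * s) in *.
  set (E2 := Q2R p - Q2R q * s).
  assert (HEE : E * E2 = 1 \/ E * E2 = -1) by (apply unit_norm_R; assumption).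
  assert (HE2sq : E2 ^ 2 = / (E ^ 2)).
  { assert (E^2 <> 0) by nra. apply (Rmult_eq_reg_l (E^2)); [|exact H]. rewrite Rinv_r by exact H. replace (E^2 * E2^2) with ((E*E2)^2) by ring. destruct HEE as [H1|H1]; rewrite H1; ring. }
  assert (Hred : reduced d (a1, a2) <->
    forall p' q', qf_unit d (p', q') ->
      let e := Q2R p' + Q2R q' * s in
      al + be <= al * e ^ 2 + be / (e ^ 2)).
  { unfold reduced. split.
    - intros H p' q' Hu. cbv zeta. set (e := Q2R p' + Q2R q' * s).
      assert (H1 := H (p', q') Hu). apply Qle_Rle in H1.
      rewrite trace_R in H1 by exact Hd0. fold s in H1.
      unfold qf_tr in H1; cbn [fst] in H1. rewrite Q2R_mult in H1.
      replace (Q2R 2) with 2 in H1 by (unfold Q2R; simpl; field).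
      assert (N := sq_inv _ _ (unit_norm_R d p' q' Hd0 Hu)). fold s in N. fold e in N.
            rewrite N in H1. unfold al, be. fold A1 A2 e in H1. lra.
    - intros H [p' q'] Hu. apply Rle_Qle.
      rewrite trace_R by exact Hd0. fold s.
      unfold qf_tr; cbn [fst]. rewrite Q2R_mult.
      replace (Q2R 2) with 2 by (unfold Q2R; simpl; field).
      assert (H1 := H p' q' Hu). cbv zeta in H1.
      set (e := Q2R p' + Q2R q' * s) in *.
      assert (N := sq_inv _ _ (unit_norm_R d p' q' Hd0 Hu)). fold s in N. fold e in N.
      rewrite N. fold A1 A2. unfold al, be in H1. lra. }
  assert (Hcl : forall p' q', qf_unit d (p', q') ->
     (Q2R p' + Q2R q' * s) ^ 2 <= 1 \/ E ^ 2 <= (Q2R p' + Q2R q' * s) ^ 2).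
  { intros p' q' Hu. set (x := Q2R p' + Q2R q' * s).
    destruct (Rle_or_lt (x ^ 2) 1) as [h|h]; [left; exact h|right].
    destruct (Rle_or_lt (E ^ 2) (x ^ 2)) as [h2|h2]; [exact h2|exfalso].
    destruct (Rle_or_lt x 0) as [hx|hx].
    - assert (Hn := Hmin _ (unit_neg _ _ _ Hu)). cbn [fst snd] in Hn.
      rewrite !Q2R_opp in Hn.
      replace (- Q2R p' + - Q2R q' * s) with (- x) in Hn by (unfold x; ring).
      assert (E <= - x) by (apply Hn; nra). nra.
    - assert (Hn := Hmin _ Hu). cbn [fst snd] in Hn. fold x in Hn.
      assert (E <= x) by (apply Hn; nra). nra. }
  assert (Hcond : reduced d (a1, a2) <-> (be <= al * E ^ 2 /\ al <= be * E ^ 2)).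
  { rewrite Hred. split.
    - intros H. split.
      + assert (H1 := H p q Heu). cbv zeta in H1. fold E in H1.
        apply key_ineq in H1; [|nra].
        assert (1 < E^2) by nra.
        destruct (Rle_or_lt be (al * E ^ 2)) as [h|h]; [exact h|]. nra.
      + assert (H1 := H p (- q)%Q (unit_conj _ _ _ Heu)). cbv zeta in H1.
        rewrite Q2R_opp in H1.
        replace (Q2R p + - Q2R q * s) with E2 in H1 by (unfold E2; ring).
        rewrite HE2sq in H1.
        apply key_ineq in H1; [|apply Rinv_0_lt_compat; nra].
        assert (0 < E^2) by nra.
        assert (HEi : E^2 * / E^2 = 1) by (apply Rinv_r; nra).
        set (z := / E^2) in *.
        assert (1 < E^2) by nra.
        assert (z < 1) by nra.
        assert (al * z <= be).
        { destruct (Rle_or_lt (al * z) be) as [h|h]; [exact h|]. nra. }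
        nra.
    - intros [C1 C2] p' q' Hu. cbv zeta.
      set (e := Q2R p' + Q2R q' * s).
      assert (N := sq_inv _ _ (unit_norm_R d p' q' Hd0 Hu)). fold s in N. fold e in N.
      assert (He0 : e <> 0).
      { destruct (unit_norm_R d p' q' Hd0 Hu) as [h|h]; fold s e in h;
        intro h'; rewrite h' in h; lra. }
      assert (Hw : 0 < e ^ 2) by (destruct (Rle_or_lt e 0); nra).
      apply key_ineq; [exact Hw|].
      assert (Hc1 := Hcl p' q' Hu). fold e in Hc1.
      assert (Hc2 := Hcl p' (- q')%Q (unit_conj _ _ _ Hu)).
      rewrite Q2R_opp in Hc2.
      replace (Q2R p' + - Q2R q' * s) with (Q2R p' - Q2R q' * s) in Hc2 by ring.
      rewrite N in Hc2.
      assert (HEi : e^2 * / e^2 = 1) by (apply Rinv_r; lra).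
      set (z := / e^2) in *. set (w := e ^ 2) in *.
      assert (1 < E^2) by nra.
      destruct Hc1 as [h1|h1].
      + destruct Hc2 as [h2|h2].
        * assert (Hw1 : w = 1) by nra. rewrite Hw1. lra.
        * assert (w * E^2 <= 1) by nra.
          assert (al * w <= be) by nra.
          nra.
      + assert (be <= al * w) by nra. nra. }
  rewrite Hcond.
  assert (HA1 : 0 < A1) by (unfold al, be in *; lra).
  rewrite div_le_iff by assumption.
  assert (HT : tanh (ln E) * (E ^ 2 + 1) = E ^ 2 - 1).
  { unfold tanh, sinh, cosh. rewrite exp_Ropp, exp_ln by lra. field. split; nra. }
  set (T := tanh (ln E)) in *.
  replace (Rabs A2 * s) with (Rabs (A2 * s))
    by (rewrite Rabs_mult, (Rabs_right s) by lra; reflexivity).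
  unfold al, be. set (x := A2 * s). set (k := E ^ 2) in *.
  assert (1 < k) by (unfold k; nra).
  split.
  - intros [C1 C2]. apply Rabs_le. split.
    + assert ((- x) * (k + 1) <= T * A1 * (k + 1)) by nra. nra.
    + assert (x * (k + 1) <= T * A1 * (k + 1)) by nra. nra.
  - intros Hab. assert (x <= Rabs x) by apply Rle_abs.
    assert (- x <= Rabs x) by (rewrite <- Rabs_Ropp; apply Rle_abs). split; nra.
Qed.
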